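(* Suppose there exist a symmetric matrix $B\in\mathbb{R}^{n^2\times n^2}$ with $B\ge0$ entrywise and $B\circ xx^{\top}=0$, and symmetric matrices $T,K,Z,H\in\mathbb{R}^{n\times n}$, such that the matrix $Q:=M-B-S$, where $S=T\otimes I_n+I_n\otimes K+J_n\otimes H+Z\otimes J_n$, satisfies $Qx=0$ and $Q\succeq c\,(I_{n^2}-n^{-1}xx^{\top})$ for some $c\ge0$. Then $X=xx^{\top}$ is a global minimizer of SDR I. If moreover $c>0$, then $xx^{\top}$ is the unique global minimizer of SDR I.
   Context: $A,\Delta\in\mathbb{R}^{n\times n}$ are symmetric, $C=A+\Delta$, $M=(I_n\otimes A-C\otimes I_n)^2$, $x=\mathrm{vec}(I_n)\in\mathbb{R}^{n^2}$ (column stacking), $J_n$ is the all-ones $n\times n$ matrix, $\otimes$ the Kronecker product, $\circ$ the Hadamard (entrywise) product. For $X\in\mathbb{R}^{n^2\times n^2}$, $X_{ij}$ denotes its $(i,j)$-th $n\times n$ block. SDR I is: minimize $\langle M,X\rangle$ over symmetric $X\in\mathbb{R}^{n^2\times n^2}$ subject to $X\succeq0$, $X\ge0$ entrywise, $\mathrm{Tr}(X_{ij})=\delta_{ij}$ and $\langle X_{ij},J_n\rangle=1$ for all $i,j$, $\sum_i X_{ii}=I_n$, $\sum_{i,j}X_{ij}=J_n$. *)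

(* Defs.v *)
(* Kronecker product = tensmx from mathcomp-real-closed (mxtens),
   whose convention is the standard one: (A *t B)[(i,k),(j,l)] = A i j * B k l
   with row index i*n+k (mxtens_index (i,k)). *)
From HB Require Import structures.
From mathcomp Require Import all_boot all_order all_algebra.
From mathcomp Require Export mxtens.
Set Implicit Arguments. Unset Strict Implicit. Unset Printing Implicit Defensive.
Import Order.TTheory GRing.Theory Num.Theory.
Local Open Scope ring_scope.

Section SDR.
Variable R : realFieldType.

Definition symmx (m : nat) (A : 'M[R]_m) : Prop := A^T = A.

Definition psdmx (m : nat) (A : 'M[R]_m) : Prop :=
  symmx A /\ forall v : 'cV[R]_m, 0 <= (v^T *m A *m v) 0 0.

Definition loewner_ge (m : nat) (A B : 'M[R]_m) : Prop := psdmx (A - B).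

Definition frob (m : nat) (A B : 'M[R]_m) : R := \sum_(i < m) \sum_(j < m) A i j * B i j.

Definition hadamard (m : nat) (A B : 'M[R]_m) : 'M[R]_m := map2_mx (fun a b => a * b) A B.

Definition Jmx (n : nat) : 'M[R]_n := const_mx 1.

(* column-stacking vectorization: entry (a,b) of A is at position b*n + a *)
Definition vecc (n : nat) (A : 'M[R]_n) : 'cV[R]_(n * n) :=
  \col_p A (mxtens_unindex p).2 (mxtens_unindex p).1.

Definition xvec (n : nat) : 'cV[R]_(n * n) := vecc (1%:M : 'M[R]_n).

Definition Mmat (n : nat) (A C : 'M[R]_n) : 'M[R]_(n * n) :=
  let D := (1%:M : 'M[R]_n) *t A - C *t (1%:M : 'M[R]_n) in D *m D.

Definition blk (n : nat) (X : 'M[R]_(n * n)) (i j : 'I_n) : 'M[R]_n :=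
  \matrix_(k, l) X (mxtens_index (i, k)) (mxtens_index (j, l)).

Definition sdr1_feasible (n : nat) (X : 'M[R]_(n * n)) : Prop :=
  [/\ symmx X, psdmx X & (forall p q, 0 <= X p q)] /\
  [/\ (forall i j : 'I_n, \tr (blk X i j) = (i == j)%:R),
      (forall i j : 'I_n, frob (blk X i j) (Jmx n) = 1),
      \sum_(i < n) blk X i i = 1%:M &
      \sum_(i < n) \sum_(j < n) blk X i j = Jmx n].

Definition sdr1_minimizer (n : nat) (M X : 'M[R]_(n * n)) : Prop :=
  sdr1_feasible X /\ forall Y, sdr1_feasible Y -> frob M X <= frob M Y.

Definition sdr1_unique_minimizer (n : nat) (M X : 'M[R]_(n * n)) : Prop :=
  sdr1_minimizer M X /\ forall Y, sdr1_minimizer M Y -> Y = X.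

End SDR.

(* Main.v *)
Require Import Defs.
From HB Require Import structures.
From mathcomp Require Import all_boot all_order all_algebra.
From mathcomp Require Import mxtens.
From mathcomp Require Import ring lra zify.
Set Implicit Arguments. Unset Strict Implicit. Unset Printing Implicit Defensive.
Import Order.TTheory GRing.Theory Num.Theory.
Local Open Scope ring_scope.

Section Aux.
Variable R : realFieldType.

Lemma frobDl m (A B C : 'M[R]_m) : frob (A + B) C = frob A C + frob B C.
Proof.
rewrite /frob -big_split; apply: eq_bigr => i _; rewrite -big_split.
by apply: eq_bigr => j _; rewrite mxE mulrDl.
Qed.

Lemma frobNl m (A C : 'M[R]_m) : frob (- A) C = - frob A C.
Proof.
rewrite /frob -sumrN; apply: eq_bigr => i _; rewrite -sumrN.
by apply: eq_bigr => j _; rewrite mxE mulNr.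
Qed.

Lemma frobBl m (A B C : 'M[R]_m) : frob (A - B) C = frob A C - frob B C.
Proof. by rewrite frobDl frobNl. Qed.

Lemma frobZl m a (A C : 'M[R]_m) : frob (a *: A) C = a * frob A C.
Proof.
rewrite /frob mulr_sumr; apply: eq_bigr => i _; rewrite mulr_sumr.
by apply: eq_bigr => j _; rewrite mxE mulrA.
Qed.

Lemma frobC m (A C : 'M[R]_m) : frob A C = frob C A.
Proof. by rewrite /frob; apply: eq_bigr => i _; apply: eq_bigr => j _; rewrite mulrC. Qed.

Lemma frobZr m a (A C : 'M[R]_m) : frob A (a *: C) = a * frob A C.
Proof. by rewrite frobC frobZl frobC. Qed.

Lemma frob_sumr m (I : finType) (A : 'M[R]_m) (F : I -> 'M[R]_m) :
  frob A (\sum_k F k) = \sum_k frob A (F k).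
Proof.
rewrite /frob; transitivity (\sum_(i < m) \sum_(j < m) \sum_k A i j * F k i j).
  by apply: eq_bigr => i _; apply: eq_bigr => j _; rewrite summxE mulr_sumr.
rewrite [RHS]exchange_big; apply: eq_bigr => i _; rewrite [RHS]exchange_big //.
Qed.

Lemma frob_outer m (W : 'M[R]_m) (u : 'cV[R]_m) :
  frob W (u *m u^T) = (u^T *m W *m u) 0 0.
Proof.
rewrite /frob mxE.
under [RHS]eq_bigr => j _ do rewrite mxE big_distrl.
rewrite [RHS]exchange_big; apply: eq_bigr => i _; apply: eq_bigr => j _.
rewrite !mxE big_ord1 !mxE /=; ring.
Qed.

Lemma frob_had m (A B : 'M[R]_m) : frob A B = \sum_i \sum_j hadamard A B i j.
Proof. by apply: eq_bigr => i _; apply: eq_bigr => j _; rewrite mxE. Qed.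

Lemma sum_tens n (F : 'I_(n * n) -> R) :
  \sum_p F p = \sum_(i < n) \sum_(k < n) F (mxtens_index (i, k)).
Proof.
rewrite pair_big /=; apply: reindex.
exists (@mxtens_unindex n n)=> p _; first by rewrite -surjective_pairing mxtens_indexK.
by rewrite -surjective_pairing mxtens_unindexK.
Qed.

Lemma sum_ind n (i : 'I_n) (F : 'I_n -> R) :
  \sum_j (j == i)%:R * F j = F i.
Proof.
rewrite (bigD1 i) //= eqxx mul1r big1 ?addr0 // => j /negbTE ->.
by rewrite mul0r.
Qed.

Lemma frob_tens n (A B : 'M[R]_n) (Y : 'M[R]_(n * n)) :
  frob (A *t B) Y = \sum_i \sum_j A i j * frob B (blk Y i j).
Proof.
rewrite /frob sum_tens; apply: eq_bigr => i _.
under eq_bigr => k _ do rewrite sum_tens.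
rewrite exchange_big; apply: eq_bigr => j _.
rewrite mulr_sumr; apply: eq_bigr => k _.
rewrite mulr_sumr; apply: eq_bigr => l _.
by rewrite tensmxE !mxE mulrA.
Qed.



Definition qf m (Y : 'M[R]_m) (v : 'cV[R]_m) := (v^T *m Y *m v) 0 0.

Lemma bil_sym m (Y : 'M[R]_m) (v w : 'cV[R]_m) : symmx Y ->
  (v^T *m Y *m w) 0 0 = (w^T *m Y *m v) 0 0.
Proof.
move=> hY; transitivity ((v^T *m Y *m w)^T 0 0); first by rewrite [in RHS]mxE.
by rewrite !trmx_mul trmxK hY mulmxA.
Qed.

Lemma qfD m (Y : 'M[R]_m) (v w : 'cV[R]_m) t : symmx Y ->
  qf Y (v + t *: w) = qf Y v + 2 * t * (w^T *m Y *m v) 0 0 + t ^+ 2 * qf Y w.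
Proof.
move=> hY; have e : (v + t *: w)^T = v^T + t *: w^T by rewrite linearD linearZ.
rewrite /qf e !mulmxDl !mulmxDr.
have b := bil_sym v w hY; rewrite -!scalemxAl -!scalemxAr !mxE; rewrite !mxE in b; rewrite b; ring.
Qed.

Lemma psd_null m (Y : 'M[R]_m) (v : 'cV[R]_m) : psdmx Y -> qf Y v = 0 -> Y *m v = 0.
Proof.
move=> [hY hq] h0; apply/matrixP => i j; rewrite (ord1 j) [RHS]mxE.
set w : 'cV[R]_m := delta_mx i 0.
have -> : (Y *m v) i 0 = (w^T *m Y *m v) 0 0.
  by rewrite -mulmxA /w trmx_delta -rowE [RHS]mxE.
set b := (w^T *m Y *m v) 0 0; set c := qf Y w.
have hc : 0 <= c by apply: hq.
set t := - b / (c + 1).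
have hc1 : 0 < c + 1 by lra.
have ht : b = - (t * (c + 1)) by rewrite /t divfK ?opprK // lt0r_neq0.
have := hq (v + t *: w); rewrite -/(qf Y _) qfD // h0 -/b -/c add0r => H.
have Ht : t ^+ 2 * (c + 2) <= 0.
  by move: H; rewrite ht => H; nra.
have : t ^+ 2 = 0.
  have h2 : 0 <= t ^+ 2 by rewrite sqr_ge0.
  nra.
by move/eqP; rewrite expf_eq0 /= => /eqP ht0; rewrite ht ht0 mul0r oppr0.
Qed.

Lemma qf_delta m (Y : 'M[R]_m) r : qf Y (delta_mx r 0) = Y r r.
Proof.
by rewrite /qf trmx_delta -rowE -colE !mxE.
Qed.

Lemma qf_outer m (y v : 'cV[R]_m) :
  qf (y *m y^T) v = ((y^T *m v) 0 0) ^+ 2.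
Proof.
rewrite /qf mulmxA -mulmxA mxE big_ord1.
have -> : (v^T *m y) 0 0 = (y^T *m v) 0 0.
  transitivity ((v^T *m y)^T 0 0); first by rewrite [in RHS]mxE.
  by rewrite trmx_mul trmxK.
by rewrite expr2.
Qed.

Lemma trmx_entry m p (A : 'M[R]_(m, p)) i j : A^T j i = A i j.
Proof. by rewrite mxE. Qed.


Lemma entD m p (A B : 'M[R]_(m, p)) i j : (A + B) i j = A i j + B i j.
Proof. by rewrite mxE. Qed.
Lemma entN m p (A : 'M[R]_(m, p)) i j : (- A) i j = - A i j.
Proof. by rewrite mxE. Qed.
Lemma entB m p (A B : 'M[R]_(m, p)) i j : (A - B) i j = A i j - B i j.
Proof. by rewrite entD entN. Qed.
Lemma entZ m p a (A : 'M[R]_(m, p)) i j : (a *: A) i j = a * A i j.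
Proof. by rewrite mxE. Qed.

Lemma qfB m (A B : 'M[R]_m) v : qf (A - B) v = qf A v - qf B v.
Proof. by rewrite /qf mulmxBr mulmxBl entB. Qed.
Lemma qfDl m (A B : 'M[R]_m) v : qf (A + B) v = qf A v + qf B v.
Proof. by rewrite /qf mulmxDr mulmxDl entD. Qed.
Lemma qfZ m a (A : 'M[R]_m) v : qf (a *: A) v = a * qf A v.
Proof. by rewrite /qf -scalemxAr -scalemxAl entZ. Qed.

Lemma psd_decomp m (Y : 'M[R]_m) : psdmx Y ->
  exists s : seq (R * 'cV[R]_m), all (fun p => 0 <= p.1) s /\
    Y = \sum_(p <- s) p.1 *: (p.2 *m p.2^T).
Proof.
suff H : forall k (Y : 'M[R]_m), psdmx Y ->
    (forall i j : 'I_m, (i < m - k)%N -> Y i j = 0) ->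
    exists s : seq (R * 'cV[R]_m), all (fun p => 0 <= p.1) s /\
      Y = \sum_(p <- s) p.1 *: (p.2 *m p.2^T).
  by move=> hY; apply: (H m Y hY) => i j; rewrite subnn.
elim=> [|k IH] {}Y hY hz.
  exists [::]; split => //; rewrite big_nil; apply/matrixP => i j.
  by rewrite [RHS]mxE hz // subn0.
case: (leqP m k) => hk.
  by apply: IH => // i j hi; apply: hz; lia.
have hr : (m - k.+1 < m)%N by lia.
set r := Ordinal hr.
have [hsym hq] := hY.
have ha : 0 <= Y r r by rewrite -qf_delta; apply: hq.
have hzr : forall i j : 'I_m, (i < r)%N -> Y i j = 0 by move=> i j hi; apply: hz.
have symY : forall i j, Y i j = Y j i by move=> i j; rewrite -[Y in LHS]hsym mxE.
case: (eqVneq (Y r r) 0) => ha0.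
  have hY0 : Y *m (delta_mx r 0 : 'cV[R]_m) = 0 by apply: psd_null => //; rewrite qf_delta.
  apply: IH => // i j hi.
  case: (ltngtP i r) => [hir|hir|hir]; first exact: hzr.
    by move: hir hi; rewrite /= => ? ?; lia.
  have -> : i = r by apply: val_inj.
  rewrite symY; move/matrixP: hY0 => /(_ j 0); rewrite -colE !mxE //.
have apos : 0 < Y r r by rewrite lt_def ha0 ha.
set a := Y r r; set y := col r Y.
set Y' := Y - a^-1 *: (y *m y^T).
have hyv : forall v : 'cV[R]_m, (y^T *m v) 0 0 = ((delta_mx r 0 : 'cV[R]_m)^T *m Y *m v) 0 0.
  by move=> v; rewrite /y colE trmx_mul hsym.
have psdY' : psdmx Y'.
  split.
    by rewrite /symmx /Y' linearB linearZ /= hsym trmx_mul trmxK.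
  move=> v; rewrite -/(qf Y' v) /Y' qfB qfZ qf_outer hyv.
  set b := (_ 0 0).
  have := hq (v + (- (b / a)) *: (delta_mx r 0 : 'cV[R]_m)).
  rewrite -/(qf Y _) qfD // qf_delta -/a -/b.
  have an0 : a != 0 by rewrite lt0r_neq0.
  have -> : qf Y v + 2 * - (b / a) * b + (- (b / a)) ^+ 2 * a
          = qf Y v - a^-1 * b ^+ 2 by field.
  by [].
have hz' : forall i j : 'I_m, (i < m - k)%N -> Y' i j = 0.
  move=> i j hi; rewrite /Y' entB entZ mxE big_ord1 !mxE.
  case: (ltngtP i r) => [hir|hir|hir].
  - by rewrite (hzr i j) // (hzr i r) //; ring.
  - by move: hir hi; rewrite /= => ? ?; lia.
  - have -> : i = r by apply: val_inj.
    rewrite (symY r j) -/a.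
    have an0 : a != 0 by rewrite lt0r_neq0.
    by field.
have [s [hs hYs]] := IH Y' psdY' hz'.
exists ((a^-1, y) :: s); split; first by rewrite /= hs andbT invr_ge0 ha.
by rewrite big_cons /= -hYs /Y' addrC subrK.
Qed.

Lemma frob0r m (A : 'M[R]_m) : frob A 0 = 0.
Proof. by rewrite /frob big1 // => i _; rewrite big1 // => j _; rewrite mxE mulr0. Qed.

Lemma frobDr m (A B C : 'M[R]_m) : frob A (B + C) = frob A B + frob A C.
Proof. by rewrite frobC frobDl !(frobC _ A). Qed.

Lemma frob_sum_outer m (W : 'M[R]_m) (s : seq (R * 'cV[R]_m)) :
  frob W (\sum_(p <- s) p.1 *: (p.2 *m p.2^T)) = \sum_(p <- s) p.1 * qf W p.2.
Proof.
elim: s => [|p s IH]; first by rewrite !big_nil frob0r.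
by rewrite !big_cons frobDr frobZr frob_outer IH.
Qed.

Lemma frob_psd m (W Y : 'M[R]_m) : psdmx W -> psdmx Y -> 0 <= frob W Y.
Proof.
move=> [_ hW] /psd_decomp [s [hs ->]]; rewrite frob_sum_outer.
elim: s hs => [|p s IH] /=; first by rewrite big_nil.
move=> /andP [hp hs]; rewrite big_cons addr_ge0 ?IH //.
by rewrite mulr_ge0 // /qf hW.
Qed.

Lemma psd_perp m (W Y : 'M[R]_m) : psdmx W -> psdmx Y -> frob W Y = 0 ->
  W *m Y = 0.
Proof.
move=> hW' /psd_decomp [s [hs ->]]; rewrite frob_sum_outer.
have [_ hW] := hW'.
elim: s hs => [|p s IH] /=; first by rewrite !big_nil mulmx0.
move=> /andP [hp hs]; rewrite !big_cons => h.
have h1 : 0 <= p.1 * qf W p.2 by rewrite mulr_ge0 // /qf hW.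
have h2 : 0 <= \sum_(q <- s) q.1 * qf W q.2.
  elim: (s) hs => [|q t IHt] /=; first by rewrite big_nil.
  by move=> /andP [hq ht]; rewrite big_cons addr_ge0 ?IHt // mulr_ge0 // /qf hW.
move/eqP: h; rewrite paddr_eq0 // => /andP [/eqP e1 /eqP e2].
rewrite mulmxDr IH // addr0.
move: e1 => /eqP; rewrite mulf_eq0 => /orP [/eqP -> | /eqP e].
  by rewrite scale0r mulmx0.
by rewrite -scalemxAr mulmxA (psd_null hW' e) mul0mx scaler0.
Qed.

Lemma sum_ind1 n (i : 'I_n) : \sum_j (j == i)%:R = 1 :> R.
Proof. by rewrite -[RHS](sum_ind i (fun=> 1)); apply: eq_bigr => j _; rewrite mulr1. Qed.

Lemma x_idx n (i k : 'I_n) : xvec R n (mxtens_index (i, k)) 0 = (k == i)%:R.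
Proof. by rewrite /xvec /vecc mxE mxtens_indexK /= mxE. Qed.

Lemma outer_ent m (u : 'cV[R]_m) p q : (u *m u^T) p q = u p 0 * u q 0.
Proof. by rewrite mxE big_ord1 mxE. Qed.

Lemma blkX n (i j k l : 'I_n) :
  blk (xvec R n *m (xvec R n)^T) i j k l = (k == i)%:R * (l == j)%:R.
Proof. by rewrite mxE outer_ent !x_idx. Qed.

Lemma x_ge0 n p : 0 <= xvec R n p 0.
Proof. by rewrite /xvec /vecc !mxE ler0n. Qed.

Lemma feasX n : sdr1_feasible (xvec R n *m (xvec R n)^T).
Proof.
split; split.
- by rewrite /symmx trmx_mul trmxK.
- split; first by rewrite /symmx trmx_mul trmxK.
  by move=> v; rewrite -/(qf _ v) qf_outer sqr_ge0.
- by move=> p q; rewrite outer_ent mulr_ge0 ?x_ge0.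
- move=> i j; rewrite /mxtrace.
  under eq_bigr => k _ do rewrite blkX.
  by rewrite (sum_ind i (fun k => (k == j)%:R)).
- move=> i j; rewrite /frob.
  under eq_bigr => k _ do under eq_bigr => l _ do rewrite blkX /Jmx mxE mulr1.
  under eq_bigr => k _ do rewrite -mulr_sumr sum_ind1 mulr1.
  exact: sum_ind1.
- apply/matrixP => k l; rewrite summxE.
  under eq_bigr => i _ do rewrite blkX eq_sym.
  by rewrite (sum_ind k (fun i => (l == i)%:R)) mxE eq_sym.
- apply/matrixP => k l; rewrite summxE /Jmx mxE.
  under eq_bigr => i _ do rewrite summxE.
  under eq_bigr => i _ do under eq_bigr => j _ do rewrite blkX eq_sym [in X in _ * X]eq_sym.
  under eq_bigr => i _ do rewrite -mulr_sumr sum_ind1 mulr1.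
  by rewrite sum_ind1.
Qed.

Lemma frob1 n (B : 'M[R]_n) : frob 1%:M B = \tr B.
Proof.
rewrite /frob /mxtrace; apply: eq_bigr => k _.
under eq_bigr => l _ do rewrite mxE eq_sym.
exact: (sum_ind k (fun l => B k l)).
Qed.

Lemma frob_tens1l n (K : 'M[R]_n) (Y : 'M[R]_(n * n)) :
  frob (1%:M *t K) Y = frob K (\sum_i blk Y i i).
Proof.
rewrite frob_tens frob_sumr; apply: eq_bigr => i _.
under eq_bigr => j _ do rewrite mxE eq_sym.
exact: (sum_ind i (fun j => frob K (blk Y i j))).
Qed.

Lemma frob_tensJl n (H : 'M[R]_n) (Y : 'M[R]_(n * n)) :
  frob (Jmx R n *t H) Y = frob H (\sum_i \sum_j blk Y i j).
Proof.
rewrite frob_tens frob_sumr; apply: eq_bigr => i _.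
rewrite frob_sumr; apply: eq_bigr => j _; by rewrite mxE mul1r.
Qed.

Lemma feasS n (T K H Z : 'M[R]_n) (Y : 'M[R]_(n * n)) : sdr1_feasible Y ->
  frob (T *t 1%:M + 1%:M *t K + Jmx R n *t H + Z *t Jmx R n) Y =
  \sum_i \sum_j T i j * (i == j)%:R + frob K 1%:M + frob H (Jmx R n)
  + \sum_i \sum_j Z i j.
Proof.
move=> [_ [htr hJ hD hS]].
rewrite !frobDl frob_tens1l frob_tensJl hD hS.
congr (_ + _ + _ + _).
  rewrite frob_tens; apply: eq_bigr => i _; apply: eq_bigr => j _.
  by rewrite frob1 htr.
rewrite frob_tens; apply: eq_bigr => i _; apply: eq_bigr => j _.
by rewrite frobC hJ mulr1.
Qed.

Lemma blkZ n a (Y : 'M[R]_(n * n)) i j : blk (a *: Y) i j = a *: blk Y i j.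
Proof. by apply/matrixP => k l; rewrite !mxE. Qed.

Lemma psdD m (A B : 'M[R]_m) : psdmx A -> psdmx B -> psdmx (A + B).
Proof.
move=> [hA qA] [hB qB]; split; first by rewrite /symmx linearD /= hA hB.
by move=> v; rewrite -/(qf _ v) qfDl addr_ge0 ?qA ?qB.
Qed.

Lemma psdZ m a (A : 'M[R]_m) : 0 <= a -> psdmx A -> psdmx (a *: A).
Proof.
move=> ha [hA qA]; split; first by rewrite /symmx linearZ /= hA.
by move=> v; rewrite -/(qf _ v) qfZ mulr_ge0 ?qA.
Qed.

Lemma psd_gram m (A : 'M[R]_m) : psdmx (A^T *m A).
Proof.
split; first by rewrite /symmx trmx_mul trmxK.
move=> v; rewrite mulmxA -trmx_mul -mulmxA mxE.
by apply: sumr_ge0 => i _; rewrite mxE -expr2 sqr_ge0.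
Qed.

Lemma xTx n : (xvec R n)^T *m xvec R n = (n%:R)%:M.
Proof.
apply/matrixP => a b; rewrite (ord1 a) (ord1 b) mxE sum_tens [RHS]mxE eqxx mulr1n.
under eq_bigr => i _ do under eq_bigr => k _ do rewrite mxE !x_idx.
under eq_bigr => i _ do rewrite (sum_ind i (fun k => (k == i)%:R)) eqxx.
by rewrite sumr_const card_ord.
Qed.

Lemma inv_idem (n : nat) : (n%:R^-1 : R) * (n%:R^-1 * n%:R) = n%:R^-1.
Proof.
case: (eqVneq (n%:R : R) 0) => [->|hn]; first by rewrite invr0 !mul0r.
by rewrite mulVf // mulr1.
Qed.

Lemma P_idem n :
  let x := xvec R n in let P := 1%:M - n%:R^-1 *: (x *m x^T) in
  P^T *m P = P.
Proof.
move=> x P.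
have hXX : (x *m x^T) *m (x *m x^T) = n%:R *: (x *m x^T).
  by rewrite mulmxA -(mulmxA x) xTx mul_mx_scalar scalemxAl.
have hPt : P^T = P by rewrite /P linearB linearZ /= trmx1 trmx_mul trmxK.
rewrite hPt /P mulmxBl mulmxBr mul1mx mulmxBr mul1mx mulmx1.
rewrite -scalemxAr -scalemxAl hXX !scalerA.
have -> : (n%:R^-1 / n%:R * n%:R : R) = n%:R^-1.
  by rewrite -mulrA inv_idem.
by rewrite subrr subr0.
Qed.

Lemma x11 m (x : 'cV[R]_m) (M : 'M[R]_1) : x *m M *m x^T = M 0 0 *: (x *m x^T).
Proof. by rewrite {1}[M]mx11_scalar mul_mx_scalar scalemxAl. Qed.

End Aux.

Unset Implicit Arguments.
Set Strict Implicit.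

Lemma sub3K (R : realFieldType) m (a b c : 'M[R]_m) : a - b - c + b + c = a.
Proof. by apply/matrixP => i j; rewrite !mxE; ring. Qed.

Theorem theorem3 (R : realFieldType) (n : nat) (A Delta : 'M[R]_n)
  (B : 'M[R]_(n * n)) (T K Z H : 'M[R]_n) (c : R) :
  symmx A -> symmx Delta ->
  symmx B -> (forall p q, 0 <= B p q) ->
  hadamard B (xvec R n *m (xvec R n)^T) = 0 ->
  symmx T -> symmx K -> symmx Z -> symmx H ->
  0 <= c ->
  let x := xvec R n in
  let M := Mmat A (A + Delta) in
  let S := T *t (1%:M : 'M[R]_n) + (1%:M : 'M[R]_n) *t K
           + Jmx R n *t H + Z *t Jmx R n in
  let Q := M - B - S in
  Q *m x = 0 ->
  loewner_ge Q (c *: (1%:M - (n%:R)^-1 *: (x *m x^T))) ->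
  sdr1_minimizer M (x *m x^T) /\
  (0 < c -> sdr1_unique_minimizer M (x *m x^T)).
Proof.
move=> hA hD hBs hB0 hhad hT hK hZ hH hc x M S Q hQx hL.
set X := x *m x^T.
set P := 1%:M - n%:R^-1 *: X.
have fX : sdr1_feasible X := feasX R n.
have ePP : P^T *m P = P := P_idem R n.
have hP : psdmx P by rewrite -ePP; apply: psd_gram.
have hQ : psdmx Q.
  have -> : Q = (Q - c *: P) + c *: P by rewrite subrK.
  by apply: psdD => //; apply: psdZ.
have hQX : frob Q X = 0 by rewrite /X frob_outer -mulmxA hQx mulmx0 mxE.
have hBX : frob B X = 0.
  rewrite frob_had hhad; apply: big1 => i _; apply: big1 => j _; by rewrite mxE.
have hBY : forall Y, sdr1_feasible Y -> 0 <= frob B Y.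
  move=> Y [[_ _ hY0] _]; apply: sumr_ge0 => i _; apply: sumr_ge0 => j _.
  exact: mulr_ge0.
have hMQ : M = Q + B + S by rewrite /Q sub3K.
have hfM : forall Y, frob M Y = frob Q Y + frob B Y + frob S Y.
  by move=> Y; rewrite hMQ !frobDl.
have hSY : forall Y, sdr1_feasible Y -> frob S Y = frob S X.
  by move=> Y fY; rewrite /S !feasS.
have hmin : sdr1_minimizer M X.
  split=> // Y fY; rewrite !hfM hQX hBX hSY // !add0r lerDr.
  by rewrite addr_ge0 ?hBY // frob_psd //; case: fY => [[]].
split=> // hcpos; split=> // Y [fY hY].
have e1 : frob M Y = frob M X.
  by apply/eqP; rewrite eq_le (hY X fX) /=; exact: (proj2 hmin Y fY).
move: e1; rewrite !hfM hQX hBX hSY // !add0r => e.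
have e2 : frob Q Y + frob B Y = 0 by apply: (addIr (frob S X)); rewrite e add0r.
have psdY : psdmx Y by case: fY => [[]].
have hQY : frob Q Y = 0.
  by move/eqP: e2; rewrite paddr_eq0 ?(frob_psd hQ psdY) ?hBY // => /andP [/eqP -> _].
have hPY : frob P Y = 0.
  have e3 : frob Q Y = frob (Q - c *: P) Y + c * frob P Y by rewrite -frobZl -frobDl subrK.
  have h1 := frob_psd hL psdY.
  have h3 : 0 <= c * frob P Y by rewrite mulr_ge0 // frob_psd.
  move: e3 h1 h3; set z := c * frob P Y; set w := frob (Q - c *: P) Y => e3 h1 h3.
  have : z = 0 by lra.
  by move/eqP; rewrite mulf_eq0 (gt_eqF hcpos) /= => /eqP.
have PY0 : P *m Y = 0 := psd_perp hP psdY hPY.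
have hPt : P^T = P := hP.1.
have hYt : Y^T = Y := psdY.1.
have YP0 : Y *m P = 0.
  by rewrite -hPt -hYt -trmx_mul PY0 trmx0.
have hY1 : Y = n%:R^-1 *: (X *m Y).
  by apply/eqP; rewrite -subr_eq0; move: PY0; rewrite /P mulmxBl mul1mx -scalemxAl => ->.
have hY2 : Y = n%:R^-1 *: (Y *m X).
  by apply/eqP; rewrite -subr_eq0; move: YP0; rewrite /P mulmxBr mulmx1 -scalemxAr => ->.
set al := (x^T *m Y *m x) 0 0.
have E : X *m (Y *m X) = al *: X by rewrite /X -x11 !mulmxA.
have eY : Y = (n%:R^-1 * n%:R^-1 * al) *: X.
  by rewrite {1}hY1 {1}hY2 -scalemxAr E !scalerA. 
case: (posnP n) => hn.
  by apply/matrixP => p q; exfalso; have := ltn_ord p; nia.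
have [_ [_ hJX _ _]] := fX.
have [_ [_ hJY _ _]] := fY.
have := hJY (Ordinal hn) (Ordinal hn).
by rewrite eY blkZ frobZl hJX mulr1 => ->; rewrite scale1r.
Qed.
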